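(* Let $\mathcal{A}$ be a unital C*-algebra and let $\mathcal{E}$ be a (left) Hilbert C*-module over $\mathcal{A}$. Let $\{\tau_n\}_{n=1}^\infty$ and $\{\omega_m\}_{m=1}^\infty$ be two modular Parseval frames for $\mathcal{E}$. Then for every $x \in \mathcal{E}$ with $x \neq 0$, \[ \left(\frac{\|\theta_\tau x\|_0+\|\theta_\omega x\|_0}{2}\right)^2\geq \|\theta_\tau x \|_0\, \|\theta_\omega x \|_0 \geq \frac{1}{\sup_{n, m \in \mathbb{N}} \|\langle \tau_n, \omega_m\rangle \|^2}. \]
   Context: A (left) Hilbert C*-module over a unital C*-algebra $\mathcal{A}$ is a left $\mathcal{A}$-module $\mathcal{E}$ with a map $\langle\cdot,\cdot\rangle:\mathcal{E}\times\mathcal{E}\to\mathcal{A}$ such that: $\langle x,x\rangle\ge 0$ for all $x$, and $\langle x,x\rangle=0$ implies $x=0$; $\langle x+y,z\rangle=\langle x,z\rangle+\langle y,z\rangle$; $\langle ax,y\rangle=a\langle x,y\rangle$ for $a\in\mathcal{A}$; $\langle x,y\rangle=\langle y,x\rangle^*$; and $\mathcal{E}$ is complete for the norm $\|x\|=\sqrt{\|\langle x,x\rangle\|}$. A collection $\{\tau_n\}_{n=1}^\infty\subseteq\mathcal{E}$ is a modular Parseval frame for $\mathcal{E}$ if $\langle x,x\rangle=\sum_{n=1}^\infty\langle x,\tau_n\rangle\langle\tau_n,x\rangle$ (convergent in $\mathcal{A}$) for all $x\in\mathcal{E}$. Let $\ell^2(\mathbb{N},\mathcal{A})$ be the set of sequences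 $\{a_n\}_{n=1}^\infty$ in $\mathcal{A}$ such that $\sum_n a_na_n^*$ converges in $\mathcal{A}$. For a modular Parseval frame $\{\tau_n\}$, the analysis operator is $\theta_\tau:\mathcal{E}\to\ell^2(\mathbb{N},\mathcal{A})$, $\theta_\tau x=\{\langle x,\tau_n\rangle\}_{n=1}^\infty$. For a sequence $\{a_n\}$ in $\mathcal{A}$, $\|\{a_n\}\|_0$ denotes the number of indices $n$ with $a_n\neq 0$ (the cardinality of its support, a value in $\{0,1,2,\dots\}\cup\{\infty\}$). In the right-hand side, $\|\langle \tau_n,\omega_m\rangle\|$ is the C*-algebra norm in $\mathcal{A}$. *)

(* Defs.v *)
From HB Require Import structures.
From mathcomp Require Import all_boot all_order all_algebra.
From mathcomp Require Import complex finmap.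
From mathcomp Require Import all_classical all_reals all_analysis.
Set Implicit Arguments. Unset Strict Implicit. Unset Printing Implicit Defensive.
Import Order.TTheory GRing.Theory Num.Theory.
Import numFieldTopology.Exports numFieldNormedType.Exports.
Local Open Scope ring_scope.
Local Open Scope complex_scope.
Local Open Scope classical_set_scope.

Section CStar.
Variable R : realType.

Definition cvg_in {T : zmodType} (d : T -> R) (u : nat -> T) (l : T) : Prop :=
  (fun n => d (u n - l)) @ \oo --> (0 : R).

Definition cauchy_in {T : zmodType} (d : T -> R) (u : nat -> T) : Prop :=
  forall e : R, 0 < e -> exists N : nat,
    forall m n : nat, (N <= m)%N -> (N <= n)%N -> d (u m - u n) < e.

Definition complete_in {T : zmodType} (d : T -> R) : Prop :=
  forall u : nat -> T, cauchy_in d u -> exists l : T, cvg_in d u l.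

Record is_cstar_algebra (A : algType R[i]) (star : A -> A) (nrm : A -> R) :
    Prop := {
  star_add : forall a b : A, star (a + b) = star a + star b;
  star_scale : forall (c : R[i]) (a : A), star (c *: a) = c^* *: star a;
  star_mul : forall a b : A, star (a * b) = star b * star a;
  star_invol : forall a : A, star (star a) = a;
  nrm_ge0 : forall a : A, 0 <= nrm a;
  nrm_eq0 : forall a : A, nrm a = 0 -> a = 0;
  nrm_triangle : forall a b : A, nrm (a + b) <= nrm a + nrm b;
  nrm_scale : forall (c : R[i]) (a : A), (nrm (c *: a))%:C = `|c| * (nrm a)%:C;
  nrm_submul : forall a b : A, nrm (a * b) <= nrm a * nrm b;
  nrm_cstar : forall a : A, nrm (star a * a) = nrm a ^+ 2;
  nrm_complete : complete_in nrm
}.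

Definition cstar_pos (A : algType R[i]) (star : A -> A) (a : A) : Prop :=
  exists b : A, a = star b * b.

Record is_hilbert_module (A : algType R[i]) (star : A -> A) (nrm : A -> R)
    (E : lmodType A) (ip : E -> E -> A) : Prop := {
  ip_pos : forall x : E, cstar_pos star (ip x x);
  ip_def : forall x : E, ip x x = 0 -> x = 0;
  ip_addl : forall x y z : E, ip (x + y) z = ip x z + ip y z;
  ip_scalel : forall (a : A) (x y : E), ip (a *: x) y = a * ip x y;
  ip_star : forall x y : E, ip x y = star (ip y x);
  hnorm_complete : complete_in (fun x : E => Num.sqrt (nrm (ip x x)))
}.

Definition modular_parseval_frame (A : algType R[i]) (nrm : A -> R)
    (E : lmodType A) (ip : E -> E -> A) (tau : nat -> E) : Prop :=
  forall x : E,
    cvg_in nrm (fun N => \sum_(0 <= n < N) ip x (tau n) * ip (tau n) x) (ip x x).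

Definition analysis_op (A : algType R[i]) (E : lmodType A) (ip : E -> E -> A)
    (tau : nat -> E) (x : E) : nat -> A := fun n => ip x (tau n).

Definition supp_card (T : zmodType) (a : nat -> T) : \bar R :=
  let S := [set n | a n != 0] in
  if `[< finite_set S >] then ((#|` fset_set S |)%:R)%:E else +oo%E.

Definition cross_sup (A : algType R[i]) (nrm : A -> R) (E : lmodType A)
    (ip : E -> E -> A) (tau omega : nat -> E) : \bar R :=
  ereal_sup [set y | exists n m : nat, y = ((nrm (ip (tau n) (omega m))) ^+ 2)%:E].

(* 1 / s on [0, +oo], with conventions 1/0 = +oo and 1/+oo = 0 *)
Definition einv (s : \bar R) : \bar R :=
  match s with
  | EFin r => if r == 0 then +oo%E else (r^-1)%:E
  | +oo%E => 0%E
  | -oo%E => 0%E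
  end.

End CStar.

(* Main.v *)
Require Import Defs.
From HB Require Import structures.
From mathcomp Require Import all_boot all_order all_algebra.
From mathcomp Require Import complex finmap.
From mathcomp Require Import ring lra.
From mathcomp Require Import all_classical all_reals all_analysis.
Import Order.TTheory GRing.Theory Num.Theory.
Import numFieldTopology.Exports numFieldNormedType.Exports.
Local Open Scope ring_scope.
Set Implicit Arguments. Unset Strict Implicit. Unset Printing Implicit Defensive.

Lemma ev_lt (R : realType) (T : zmodType) (d : T -> R) u l :
  cvg_in d u l -> forall e : R, 0 < e -> exists N : nat, forall n, (N <= n)%N -> d (u n - l) < e.
Proof.
move=> H e e0; have := @cvgr_dist_lt _ _ _ (\oo)%classic _ (fun n => d (u n - l)) 0 H e e0.
case=> N _ HN; exists N => n Nn.
have := HN n Nn; rewrite /= sub0r normrN => h.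
exact: le_lt_trans (ler_norm _) h.
Qed.

Lemma conj_i (R : realType) : (('i : R[i])^*)%C = - 'i%C.
Proof. by apply/eqP; rewrite eq_complex /= oppr0 !eqxx. Qed.


Lemma nrm_realZ (R : realType) (A : algType R[i]) (star : A -> A) (nrm : A -> R)
  (HA : is_cstar_algebra star nrm) {k : R[i]} {r : R} (a : A) :
  `|k| = r%:C%C -> nrm (k *: a) = r * nrm a.
Proof.
move=> hk; apply: (@complexI R); rewrite (nrm_scale HA) hk.
by rewrite rmorphM.
Qed.

Lemma nrm0 (R : realType) (A : algType R[i]) (star : A -> A) (nrm : A -> R)
  (HA : is_cstar_algebra star nrm) : nrm 0 = 0.
Proof.
rewrite -(scale0r (0:A)) (nrm_realZ HA (r := 0)) ?mul0r //.
by rewrite normr0.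
Qed.

Lemma nrmN (R : realType) (A : algType R[i]) (star : A -> A) (nrm : A -> R)
  (HA : is_cstar_algebra star nrm) (a : A) : nrm (- a) = nrm a.
Proof.
rewrite -scaleN1r (nrm_realZ HA (r := 1)) ?mul1r //.
by rewrite normrN normr1.
Qed.

Lemma nrmB (R : realType) (A : algType R[i]) (star : A -> A) (nrm : A -> R)
  (HA : is_cstar_algebra star nrm) (a b : A) : nrm (a - b) <= nrm a + nrm b.
Proof. by rewrite -(nrmN HA b); apply: (nrm_triangle HA). Qed.

Lemma nrm_sum (R : realType) (A : algType R[i]) (star : A -> A) (nrm : A -> R)
  (HA : is_cstar_algebra star nrm) (I : Type) (s : seq I) (F : I -> A) :
  nrm (\sum_(i <- s) F i) <= \sum_(i <- s) nrm (F i).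
Proof.
elim: s => [|i s IH]; first by rewrite !big_nil (nrm0 HA).
rewrite !big_cons; apply: le_trans (nrm_triangle HA _ _) _.
by rewrite lerD2l.
Qed.

Lemma star0 (R : realType) (A : algType R[i]) (star : A -> A) (nrm : A -> R)
  (HA : is_cstar_algebra star nrm) : star 0 = 0.
Proof.
have := star_add HA 0 0; rewrite addr0 => h.
by apply: (addrI (star 0)); rewrite addr0 -h.
Qed.

Lemma star1 (R : realType) (A : algType R[i]) (star : A -> A) (nrm : A -> R)
  (HA : is_cstar_algebra star nrm) : star 1 = 1.
Proof.
have : star 1 * 1 = star 1 * star (star 1) by rewrite (star_invol HA).
by rewrite -(star_mul HA) !mulr1 (star_invol HA).
Qed.

Lemma nrm_le_star (R : realType) (A : algType R[i]) (star : A -> A) (nrm : A -> R)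
  (HA : is_cstar_algebra star nrm) (a : A) : nrm a <= nrm (star a).
Proof.
have [h0|hp] := eqVneq (nrm a) 0; first by rewrite h0 (nrm_ge0 HA).
have pos : 0 < nrm a by rewrite lt0r hp (nrm_ge0 HA).
have := nrm_submul HA (star a) a; rewrite (nrm_cstar HA) expr2.
by rewrite ler_pM2r.
Qed.

Lemma nrm_star (R : realType) (A : algType R[i]) (star : A -> A) (nrm : A -> R)
  (HA : is_cstar_algebra star nrm) (a : A) : nrm (star a) = nrm a.
Proof.
apply/eqP; rewrite eq_le (nrm_le_star HA) andbT.
by rewrite -{2}(star_invol HA a) (nrm_le_star HA).
Qed.

Lemma ip_addr (R : realType) (A : algType R[i]) (star : A -> A) (nrm : A -> R)
  (HA : is_cstar_algebra star nrm) (E : lmodType A) (ip : E -> E -> A)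
  (HE : is_hilbert_module star nrm ip) (x y z : E) :
  ip x (y + z) = ip x y + ip x z.
Proof. by rewrite !(ip_star HE x) (ip_addl HE) (star_add HA). Qed.

Lemma ip_scaler (R : realType) (A : algType R[i]) (star : A -> A) (nrm : A -> R)
  (HA : is_cstar_algebra star nrm) (E : lmodType A) (ip : E -> E -> A)
  (HE : is_hilbert_module star nrm ip) (a : A) (x y : E) :
  ip x (a *: y) = ip x y * star a.
Proof. by rewrite !(ip_star HE x) (ip_scalel HE) (star_mul HA). Qed.

Definition Fp (R : realType) (A : algType R[i]) (E : lmodType A) (ip : E -> E -> A)
  (tau : nat -> E) (N : nat) (u v : E) : A :=
  ip u v - \sum_(0 <= n < N) ip u (tau n) * ip (tau n) v.

Lemma Fp_addl (R : realType) (A : algType R[i]) (star : A -> A) (nrm : A -> R)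
  (HA : is_cstar_algebra star nrm) (E : lmodType A) (ip : E -> E -> A)
  (HE : is_hilbert_module star nrm ip) tau N (u1 u2 v : E) :
  Fp ip tau N (u1 + u2) v = Fp ip tau N u1 v + Fp ip tau N u2 v.
Proof.
rewrite /Fp (ip_addl HE).
under eq_bigr do rewrite (ip_addl HE) mulrDl.
by rewrite big_split /= opprD addrACA.
Qed.

Lemma Fp_addr (R : realType) (A : algType R[i]) (star : A -> A) (nrm : A -> R)
  (HA : is_cstar_algebra star nrm) (E : lmodType A) (ip : E -> E -> A)
  (HE : is_hilbert_module star nrm ip) tau N (u v1 v2 : E) :
  Fp ip tau N u (v1 + v2) = Fp ip tau N u v1 + Fp ip tau N u v2.
Proof.
rewrite /Fp (ip_addr HA HE).
under eq_bigr do rewrite (ip_addr HA HE) mulrDr.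
by rewrite big_split /= opprD addrACA.
Qed.

Lemma Fp_scalel (R : realType) (A : algType R[i]) (star : A -> A) (nrm : A -> R)
  (HA : is_cstar_algebra star nrm) (E : lmodType A) (ip : E -> E -> A)
  (HE : is_hilbert_module star nrm ip) tau N (a : A) (u v : E) :
  Fp ip tau N (a *: u) v = a * Fp ip tau N u v.
Proof.
rewrite /Fp (ip_scalel HE) mulrBr mulr_sumr.
by under eq_bigr do rewrite (ip_scalel HE) -mulrA.
Qed.

Lemma Fp_scaler (R : realType) (A : algType R[i]) (star : A -> A) (nrm : A -> R)
  (HA : is_cstar_algebra star nrm) (E : lmodType A) (ip : E -> E -> A)
  (HE : is_hilbert_module star nrm ip) tau N (a : A) (u v : E) :
  Fp ip tau N u (a *: v) = Fp ip tau N u v * star a.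
Proof.
rewrite /Fp (ip_scaler HA HE) mulrBl mulr_suml.
by under eq_bigr do rewrite (ip_scaler HA HE) mulrA.
Qed.

Lemma starZ1 (R : realType) (A : algType R[i]) (star : A -> A) (nrm : A -> R)
  (HA : is_cstar_algebra star nrm) (k : R[i]) : star (k *: (1 : A)) = (k^*)%C *: 1.
Proof. by rewrite (star_scale HA) (star1 HA). Qed.

Lemma Fp_quad (R : realType) (A : algType R[i]) (star : A -> A) (nrm : A -> R)
  (HA : is_cstar_algebra star nrm) (E : lmodType A) (ip : E -> E -> A)
  (HE : is_hilbert_module star nrm ip) tau N (k : R[i]) (x y : E) :
  let z := x + (k *: (1 : A)) *: y in
  Fp ip tau N z z = Fp ip tau N x x + (k^*)%C *: Fp ip tau N x y
     + (k *: Fp ip tau N y x + (k * (k^*)%C) *: Fp ip tau N y y).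
Proof.
move=> z; rewrite /z !(Fp_addl HA HE) !(Fp_addr HA HE) !(Fp_scalel HA HE).
rewrite !(Fp_scaler HA HE) (starZ1 HA) -!scalerAl !mul1r -!scalerAr !mulr1.
by rewrite scalerA !addrA.
Qed.

Lemma Fp_diff (R : realType) (A : algType R[i]) (star : A -> A) (nrm : A -> R)
  (HA : is_cstar_algebra star nrm) (E : lmodType A) (ip : E -> E -> A)
  (HE : is_hilbert_module star nrm ip) tau N (k : R[i]) (x y : E) :
  Fp ip tau N (x + (k *: (1 : A)) *: y) (x + (k *: (1 : A)) *: y)
  - Fp ip tau N (x + ((- k) *: (1 : A)) *: y) (x + ((- k) *: (1 : A)) *: y)
  = ((k^*)%C *: Fp ip tau N x y + k *: Fp ip tau N y x) *+ 2.
Proof.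
rewrite !(Fp_quad HA HE) rmorphN /= mulrNN !scaleNr.
set P := Fp ip tau N x x; set X := _ *: Fp ip tau N x y.
set Y := k *: _; set Z := _ *: Fp ip tau N y y.
rewrite opprD (addrACA (P + X)) (addrC P X) addrKA (addrC (- Y) Z) addrKA !opprK.
by rewrite mulr2n addrACA.
Qed.

Lemma polar_alg (R : realType) (V : lmodType R[i]) (Q Rr : V) :
  Q *+ 4 = ((1^*)%C *: Q + 1 *: Rr) *+ 2 + 'i%C *: (((('i%C)^*)%C *: Q + 'i%C *: Rr) *+ 2).
Proof.
rewrite conjc1 conj_i !scale1r -scalerMnr scalerDr !scalerA mulrN -expr2 sqr_i.
rewrite opprK !scaleN1r scale1r -mulrnDl addrACA subrr addr0 -mulr2n -mulrnA.
by [].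
Qed.

Lemma Fp_polar (R : realType) (A : algType R[i]) (star : A -> A) (nrm : A -> R)
  (HA : is_cstar_algebra star nrm) (E : lmodType A) (ip : E -> E -> A)
  (HE : is_hilbert_module star nrm ip) tau N (x y : E) :
  let G k := Fp ip tau N (x + (k *: (1 : A)) *: y) (x + (k *: (1 : A)) *: y) in
  Fp ip tau N x y *+ 4 = (G 1 - G (-1)) + 'i%C *: (G 'i%C - G (- 'i%C)).
Proof.
move=> G; rewrite /G !(Fp_diff HA HE).
exact: polar_alg.
Qed.

Lemma Fp_polar_nrm (R : realType) (A : algType R[i]) (star : A -> A) (nrm : A -> R)
  (HA : is_cstar_algebra star nrm) (E : lmodType A) (ip : E -> E -> A)
  (HE : is_hilbert_module star nrm ip) tau N (x y : E) :
  let G k := Fp ip tau N (x + (k *: (1 : A)) *: y) (x + (k *: (1 : A)) *: y) in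
  4 * nrm (Fp ip tau N x y) <=
    nrm (G 1) + nrm (G (-1)) + (nrm (G 'i%C) + nrm (G (- 'i%C))).
Proof.
cbv zeta.
rewrite -(nrm_realZ HA (k := 4%:R)); last by rewrite normr_nat rmorph_nat.
rewrite scaler_nat.
have := Fp_polar HA HE tau N x y; cbv zeta => ->.
apply: le_trans (nrm_triangle HA _ _) _.
apply: lerD; first exact: nrmB HA _ _.
rewrite (nrm_realZ HA (r := 1)) ?mul1r; first exact: nrmB HA _ _.
by rewrite normc_def /= expr0n /= add0r expr1n sqrtr1.
Qed.

Lemma polar_ev (R : realType) (A : algType R[i]) (star : A -> A) (nrm : A -> R)
  (HA : is_cstar_algebra star nrm) (E : lmodType A) (ip : E -> E -> A)
  (HE : is_hilbert_module star nrm ip) tau (Ht : modular_parseval_frame nrm ip tau)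
  (x y : E) (e : R) : 0 < e ->
  exists N0 : nat, forall N, (N0 <= N)%N -> nrm (Fp ip tau N x y) < e.
Proof.
move=> e0.
have ev z : exists N0 : nat, forall N, (N0 <= N)%N -> nrm (Fp ip tau N z z) < e.
  have [N0 HN] := ev_lt (Ht z) e0; exists N0 => N /HN.
  by rewrite /Fp -(nrmN HA) opprB.
set G := fun k : R[i] => x + (k *: (1 : A)) *: y.
have [N1 H1] := ev (G 1); have [N2 H2] := ev (G (-1)).
have [N3 H3] := ev (G 'i%C); have [N4 H4] := ev (G (- 'i%C)).
exists (maxn (maxn N1 N2) (maxn N3 N4)) => N.
rewrite !geq_max => /andP[/andP[h1 h2] /andP[h3 h4]].
have := Fp_polar_nrm HA HE tau N x y => /= h.
rewrite -(ltr_pM2l (_ : 0 < 4)) //; apply: le_lt_trans h _.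
have -> : 4 * e = e + e + (e + e) :> R by lra.
by rewrite !ltrD ?H1 ?H2 ?H3 ?H4.
Qed.

Lemma sum_supp (V : zmodType) (F : nat -> V) (s : seq nat) N :
  uniq s -> (forall n, F n != 0 -> n \in s) -> (forall n, n \in s -> (n < N)%N) ->
  \sum_(0 <= n < N) F n = \sum_(n <- s) F n.
Proof.
move=> us hF hN; rewrite (bigID (mem s)) /= [X in _ + X]big1 ?addr0; last first.
  by move=> n /negP hn; apply/eqP/negP => /negP /hF.
rewrite -big_filter; apply: perm_big; apply: uniq_perm => //.
  by apply: filter_uniq; apply: iota_uniq.
move=> n; rewrite mem_filter mem_index_iota /=.
by case hs: (n \in s) => //=; rewrite hN.
Qed.

Lemma nrm_eq0_lt (R : realType) (A : algType R[i]) (star : A -> A) (nrm : A -> R)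
  (HA : is_cstar_algebra star nrm) (a : A) :
  (forall e : R, 0 < e -> nrm a < e) -> a = 0.
Proof.
move=> H; apply: (nrm_eq0 HA); apply/eqP; rewrite eq_le (nrm_ge0 HA) andbT.
rewrite leNgt; apply/negP => h; have := H _ h.
by rewrite ltxx.
Qed.

Lemma frame_expand (R : realType) (A : algType R[i]) (star : A -> A) (nrm : A -> R)
  (HA : is_cstar_algebra star nrm) (E : lmodType A) (ip : E -> E -> A)
  (HE : is_hilbert_module star nrm ip) tau (Ht : modular_parseval_frame nrm ip tau)
  (x y : E) (s : seq nat) :
  uniq s -> (forall n, ip x (tau n) != 0 -> n \in s) ->
  ip x y = \sum_(n <- s) ip x (tau n) * ip (tau n) y.
Proof.
move=> us hs; apply/eqP; rewrite -subr_eq0; apply/eqP.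
apply: (nrm_eq0_lt HA) => e e0.
have [N0 HN] := polar_ev HA HE Ht x y e0.
set N1 := (\max_(n <- s) n).+1.
have := HN (maxn N0 N1); rewrite leq_maxl => /(_ isT).
rewrite /Fp (@sum_supp _ _ s) //.
  by move=> n hn; apply: hs; apply/eqP => h0; move: hn; rewrite h0 mul0r eqxx.
move=> n ns; rewrite leq_max; apply/orP; right.
by rewrite ltnS (leq_bigmax_seq (F := id)).
Qed.

Lemma frame_bound (R : realType) (A : algType R[i]) (star : A -> A) (nrm : A -> R)
  (HA : is_cstar_algebra star nrm) (E : lmodType A) (ip : E -> E -> A)
  (HE : is_hilbert_module star nrm ip) tau (Ht : modular_parseval_frame nrm ip tau)
  (x y : E) (s : seq nat) (M : R) :
  uniq s -> (forall n, ip x (tau n) != 0 -> n \in s) ->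
  (forall n, nrm (ip (tau n) y) <= M) ->
  nrm (ip x y) <= M * \sum_(n <- s) nrm (ip x (tau n)).
Proof.
move=> us hs hM; rewrite (frame_expand HA HE Ht y us hs).
apply: le_trans (nrm_sum HA _ _) _; rewrite mulr_sumr; apply: ler_sum => n _.
apply: le_trans (nrm_submul HA _ _) _; rewrite mulrC.
apply: ler_wpM2r; last exact: hM.
exact: (nrm_ge0 HA).
Qed.

Lemma sum_const_seq (V : zmodType) (I : Type) (s : seq I) (c : V) :
  \sum_(i <- s) c = c *+ size s.
Proof. by elim: s => [|i s IH]; rewrite ?big_nil ?big_cons ?IH ?mulrS. Qed.

Lemma amgm_e (R : realType) (a b : \bar R) : (0 <= a)%E -> (0 <= b)%E ->
  (a * b <= ((a + b) * (2^-1)%:E) * ((a + b) * (2^-1)%:E))%E.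
Proof.
have h2 : (0 < (2^-1 : R)%:E)%E by rewrite lte_fin invr_gt0.
case: a => [r| |] ha; case: b => [q| |] hb //.
- rewrite -!EFinD -!EFinM lee_fin.
  have hh : (2^-1 : R) * 2 = 1 by rewrite mulVf.
  have := sqr_ge0 (r - q); move: (2^-1 : R) hh => h hh sq; nra.
- by rewrite addey // (gt0_mulye h2) mulyy leey.
- by rewrite addye // (gt0_mulye h2) mulyy leey.
- by rewrite addye // (gt0_mulye h2) mulyy leey.
Qed.

Lemma supp_card_ge0 (R : realType) (T : zmodType) (u : nat -> T) :
  (0 <= supp_card R u)%E.
Proof. by rewrite /supp_card; case: asboolP => _; rewrite ?lee_fin ?leey. Qed.

Lemma supp_card_gt0 (R : realType) (T : zmodType) (u : nat -> T) n :
  u n != 0 -> (0 < supp_card R u)%E.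
Proof.
move=> hn; rewrite /supp_card; case: asboolP => fS; last by rewrite ltey.
rewrite lte_fin ltr0n -has_predT; apply/hasP; exists n => //.
by rewrite in_fset_set // inE.
Qed.

Lemma some_nz (R : realType) (A : algType R[i]) (star : A -> A) (nrm : A -> R)
  (HA : is_cstar_algebra star nrm) (E : lmodType A) (ip : E -> E -> A)
  (HE : is_hilbert_module star nrm ip) tau (Ht : modular_parseval_frame nrm ip tau)
  (x : E) : x != 0 -> exists n, ip x (tau n) != 0.
Proof.
move=> hx; case: (pselect (exists n, ip x (tau n) != 0)) => // H.
have H0 n : ip x (tau n) = 0.
  by apply/eqP; apply/negPn/negP => hn; apply: H; exists n.
exfalso; move/negP: hx; apply; apply/eqP; apply: (ip_def HE).
apply: (nrm_eq0_lt HA) => e e0.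
have [N HN] := ev_lt (Ht x) e0.
have := HN N (leqnn N).
by rewrite big1 ?sub0r ?(nrmN HA) // => n _; rewrite H0 mul0r.
Qed.

Lemma sum_ge_term (R : realType) (s : seq nat) (F : nat -> R) n :
  uniq s -> n \in s -> (forall i, 0 <= F i) -> F n <= \sum_(i <- s) F i.
Proof.
move=> us ns F0; rewrite (bigD1_seq n) //= lerDl.
by apply: sumr_ge0 => i _.
Qed.

Unset Implicit Arguments.

Theorem mainTheorem1 (R : realType) (A : algType R[i]) (star : A -> A)
    (nrm : A -> R) (HA : is_cstar_algebra star nrm)
    (E : lmodType A) (ip : E -> E -> A) (HE : is_hilbert_module star nrm ip)
    (tau omega : nat -> E)
    (Htau : modular_parseval_frame nrm ip tau)
    (Homega : modular_parseval_frame nrm ip omega)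
    (x : E) (hx : x != 0) :
  let a := supp_card R (analysis_op ip tau x) in
  let b := supp_card R (analysis_op ip omega x) in
  let h := ((a + b) * (2^-1)%:E)%E in
  (a * b <= h * h)%E /\ (einv (cross_sup nrm ip tau omega) <= a * b)%E.
Proof.
move=> a b h; split.
  by apply: amgm_e; apply: supp_card_ge0.
have [n0 hn0] := some_nz HA HE Htau hx.
have [m0 hm0] := some_nz HA HE Homega hx.
have a0 : (0 < a)%E := supp_card_gt0 R hn0.
have b0 : (0 < b)%E := supp_card_gt0 R hm0.
case hs: (cross_sup nrm ip tau omega) => [r| |]; last 2 first.
- by rewrite /einv; apply: mule_ge0; apply: ltW.
- by rewrite /einv; apply: mule_ge0; apply: ltW.
have hub n m : (((nrm (ip (tau n) (omega m))) ^+ 2)%:E <= r%:E)%E.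
  by rewrite -hs; apply: ereal_sup_ubound; exists n, m.
have r0 : 0 <= r.
  have := hub 0%N 0%N; rewrite lee_fin; apply: le_trans.
  exact: sqr_ge0.
set q := Num.sqrt r.
have hq n m : nrm (ip (tau n) (omega m)) <= q.
  rewrite -(ger0_norm (nrm_ge0 HA _)) -sqrtr_sqr; apply: ler_wsqrtr.
  by rewrite -lee_fin.
have hq' n m : nrm (ip (omega m) (tau n)) <= q.
  by rewrite (ip_star HE) (nrm_star HA).
have q0 : 0 <= q by apply: sqrtr_ge0.
move: a0 b0; rewrite /a /b /supp_card.
case: asboolP => fS; last first.
  case: asboolP => fT a0 b0; last by rewrite mulyy leey.
  by rewrite gt0_mulye // leey.
case: asboolP => fT a0 b0; last by rewrite gt0_muley // leey.
set S := [set n | analysis_op ip tau x n != 0]%classic in fS a0 *.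
set T := [set n | analysis_op ip omega x n != 0]%classic in fT b0 *.
set s := fset_set S; set t := fset_set T.
have us : uniq s by apply: fset_uniq.
have ut : uniq t by apply: fset_uniq.
have hsS n : ip x (tau n) != 0 -> n \in s by move=> hn; rewrite in_fset_set // inE.
have htT m : ip x (omega m) != 0 -> m \in t by move=> hm; rewrite in_fset_set // inE.
set Cs := \sum_(n <- s) nrm (ip x (tau n)).
set Ds := \sum_(m <- t) nrm (ip x (omega m)).
have hd m : nrm (ip x (omega m)) <= q * Cs.
  by apply: (frame_bound HA HE Htau) => // n; apply: hq.
have hc n : nrm (ip x (tau n)) <= q * Ds.
  by apply: (frame_bound HA HE Homega) => // m; apply: hq'.
have hDs : Ds <= (size t)%:R * (q * Cs).
  rewrite /Ds; apply: le_trans (_ : \sum_(m <- t) (q * Cs) <= _).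
    by apply: ler_sum => m _; apply: hd.
  by rewrite sum_const_seq mulr_natl.
have hCs : Cs <= (size s)%:R * (q * Ds).
  rewrite /Cs; apply: le_trans (_ : \sum_(n <- s) (q * Ds) <= _).
    by apply: ler_sum => n _; apply: hc.
  by rewrite sum_const_seq mulr_natl.
have Ds0 : 0 < Ds.
  apply: lt_le_trans (sum_ge_term ut (htT _ hm0) (fun i => nrm_ge0 HA _)).
  by rewrite lt0r (nrm_ge0 HA) andbT; apply: contra hm0 => /eqP /(nrm_eq0 HA) ->.
have qq : q * q = r by rewrite -expr2 sqr_sqrtr.
have key : 1 <= (size s)%:R * (size t)%:R * r.
  have st0 : 0 <= (size t)%:R :> R by [].
  have sz0 : 0 <= (size s)%:R :> R by [].
  have h1 : Ds <= (size t)%:R * q * ((size s)%:R * (q * Ds)).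
    apply: le_trans hDs _; rewrite -mulrA; apply: ler_wpM2l => //.
    by apply: ler_wpM2l.
  have h3 : Ds <= ((size s)%:R * (size t)%:R * r) * Ds.
    by apply: le_trans h1 _; rewrite -qq le_eqVlt; apply/orP; left; apply/eqP; ring.
  by rewrite -(ler_pM2r Ds0) mul1r.
have rn0 : r != 0 by apply/eqP => r0'; move: key; rewrite r0' mulr0 ler10.
rewrite /einv (negbTE rn0) -EFinM lee_fin.
have rpos : 0 < r by rewrite lt0r rn0 r0.
by rewrite -[r^-1]mul1r ler_pdivrMr.
Qed.
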